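(* Let $1\le u\le n$, let $p\ge1$, and let $X\subset\mathbb{Z}^n$ be $c_u$-connected. Let $A,B\subset X$ be finite, nonempty, $c_u$-connected sets. Suppose $H_{(X,c_u)}(A,B)\le m$ for some $m\in\mathbb{N}$. Then $H_p(A,B)\le m\,u^{1/p}$.
   Context: Two distinct points $x=(x_1,\dots,x_n),y=(y_1,\dots,y_n)\in\mathbb{Z}^n$ are $c_u$-adjacent if there are at most $u$ indices $i$ with $|x_i-y_i|=1$ and for all other indices $j$, $x_j=y_j$. A set is $c_u$-connected if any two of its points are joined by a finite sequence of points in the set with consecutive points $c_u$-adjacent. A $c_u$-path in $X$ of length $k$ from $a$ to $b$ is a sequence $a=y_0,\dots,y_k=b$ in $X$ with $y_i,y_{i+1}$ $c_u$-adjacent. $H_{(X,c_u)}(A,B)$ is the least $\varepsilon\ge0$ such that for every $a\in A$ there is $b'\in B$ and a $c_u$-path in $X$ of length $\le\varepsilon$ from $a$ to $b'$, and for every $b\in B$ there is $a'\in A$ and a $c_u$-path in $X$ of length $\le\varepsilon$ from $b$ to $a'$. $d_p(x,y)=\left(\sum_i|x_i-y_i|^p\right)^{1/p}$ and $H_p(A,B)=\min\{\varepsilon\ge0:\forall a\in A\ \exists b\in B,\ d_p(a,b)\le\varepsilon,\ \text{and}\ \forall b\in B\ \exists a\in A,\ d_p(a,b)\le\varepsilon\}$. *)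

(* Defs.v *)
From HB Require Import structures.
From mathcomp Require Import all_boot all_order all_algebra.
From mathcomp Require Import all_classical all_reals exp.
Set Implicit Arguments. Unset Strict Implicit. Unset Printing Implicit Defensive.
Import Order.TTheory GRing.Theory Num.Theory.
Local Open Scope ring_scope.
Local Open Scope classical_set_scope.

Definition pt (n : nat) := {ffun 'I_n -> int}.

Definition cu_adj (n u : nat) (x y : pt n) : bool :=
  [&& x != y,
      [forall i, (x i == y i) || (`|x i - y i| == 1)] &
      (#|[set i | `|x i - y i| == 1]| <= u)%N].

Definition cu_path (n u : nat) (X : set (pt n)) (a b : pt n) (k : nat) : Prop :=
  exists s : seq (pt n),
    size s = k /\ path (cu_adj u) a s /\ last a s = b /\
    (forall z, z \in a :: s -> X z).

Definition cu_connected (n u : nat) (X : set (pt n)) : Prop :=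
  forall x y, X x -> X y -> exists k, cu_path u X x y k.

Definition H_cu {R : realType} (n u : nat) (X A B : set (pt n)) : R :=
  inf [set e : R | 0 <= e /\
    (forall a, A a -> exists b' k, B b' /\ cu_path u X a b' k /\ (k%:R <= e)) /\
    (forall b, B b -> exists a' k, A a' /\ cu_path u X b a' k /\ (k%:R <= e))].

Definition d_p {R : realType} (n : nat) (p : R) (x y : pt n) : R :=
  powR (\sum_(i < n) (`|x i - y i|%:~R) `^ p) p^-1.

Definition H_p {R : realType} (n : nat) (p : R) (A B : set (pt n)) : R :=
  inf [set e : R | 0 <= e /\
    (forall a, A a -> exists b, B b /\ d_p p a b <= e) /\
    (forall b, B b -> exists a, A a /\ d_p p a b <= e)].

(* Main.v *)
Require Import Defs.
From HB Require Import structures.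
From mathcomp Require Import all_boot all_order all_algebra.
From mathcomp Require Import all_classical all_reals exp.
From mathcomp Require Import lra.
Set Implicit Arguments. Unset Strict Implicit. Unset Printing Implicit Defensive.
Import Order.TTheory GRing.Theory Num.Theory.
Local Open Scope ring_scope.
Local Open Scope classical_set_scope.

Lemma seq_bound (T : eqType) (s : seq T) (P : T -> nat -> Prop) :
  (forall a, a \in s -> exists k, P a k) ->
  exists K, forall a, a \in s -> exists k, (k <= K)%N /\ P a k.
Proof.
elim: s => [|x s IH] H; first by exists 0%N.
have [K HK] : exists K, forall a, a \in s -> exists k, (k <= K)%N /\ P a k.
  by apply: IH => a ha; apply: H; rewrite inE ha orbT.
have [k Hk] := H x (mem_head _ _).
exists (maxn K k) => a; rewrite inE => /orP[/eqP->|ha].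
  by exists k; split => //; apply: leq_maxr.
have [k' [Hk' Pk']] := HK a ha; exists k'; split => //.
exact: leq_trans Hk' (leq_maxl _ _).
Qed.

Lemma fin_bound (T : choiceType) (A : set T) (P : T -> nat -> Prop) :
  finite_set A -> (forall a, A a -> exists k, P a k) ->
  exists K, forall a, A a -> exists k, (k <= K)%N /\ P a k.
Proof.
move=> /finite_fsetP[F ->] H.
have [K HK] := @seq_bound _ (finmap.enum_fset F) P (fun a ha => H a ha).
by exists K => a ha; apply: HK.
Qed.

Definition D (n : nat) (x y : pt n) (i : 'I_n) : nat := absz (x i - y i).

Lemma adj_bound (n u : nat) (a z : pt n) : cu_adj u a z ->
  (forall i, D a z i <= 1)%N /\ (\sum_i D a z i <= u)%N.
Proof.
case/and3P => _ /forallP H1 H2.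
have E : forall i, D a z i = (i \in [set i0 : 'I_n | `|a i0 - z i0| == 1]%SET) :> nat.
  move=> i; rewrite inE /D; case: (orP (H1 i)) => [/eqP->|/eqP h].
    by rewrite subrr.
  by rewrite h eqxx /=; apply/eqP; rewrite -eqz_nat abszE h.
split; first by move=> i; rewrite E; case: (_ \in _).
apply: leq_trans H2; rewrite (eq_bigr _ (fun i _ => E i)).
rewrite -sum1_card [X in (_ <= X)%N]big_mkcond /=.
apply: leq_sum => i _; rewrite inE; case: ifP => h; first by case: (_ == _).
move: h; rewrite /in_mem /= => /negbT /asboolPn h.
suff -> : (`|a i - z i| == 1) = false by [].
apply/negbTE/eqP => e; apply: h; rewrite /=.
by rewrite -eqz_nat abszE e.
Qed.

Lemma path_bound (n u : nat) (a : pt n) (s : seq (pt n)) :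
  path (cu_adj u) a s ->
  (forall i, D a (last a s) i <= size s)%N /\ (\sum_i D a (last a s) i <= size s * u)%N.
Proof.
elim: s a => [|z s IH] a /=.
  by move=> _; split => [i|]; [rewrite /D subrr | rewrite big1 // => i _; rewrite /D subrr].
case/andP => Haz /IH [H1 H2]; have [G1 G2] := adj_bound Haz.
have T : forall i, (D a (last z s) i <= D a z i + D z (last z s) i)%N.
  by move=> i; apply: leqD_dist.
split.
  by move=> i; apply: (leq_trans (T i)); rewrite -add1n leq_add.
apply: leq_trans; first by apply: leq_sum => i _; exact: T i.
by rewrite big_split /= mulSn leq_add.
Qed.
Lemma real_bound (R : realType) (n k u : nat) (d : 'I_n -> nat) (p : R) :
  1 <= p -> (forall i, d i <= k)%N -> (\sum_i d i <= k * u)%N ->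
  powR (\sum_i ((d i)%:R : R) `^ p) p^-1 <= k%:R * powR u%:R p^-1.
Proof.
move=> p1 dk ds.
have p0 : 0 < p by apply: lt_le_trans p1.
have pn0 : p != 0 by rewrite gt_eqF.
have ip0 : p^-1 != 0 by rewrite invr_eq0.
case: k dk ds => [|k] dk ds.
  rewrite big1 ?powR0 ?mul0r // => i _.
  by move: (dk i); rewrite leqn0 => /eqP ->; rewrite powR0.
set K : R := k.+1%:R.
have K0 : 0 < K by rewrite ltr0n.
have S1 : \sum_i ((d i)%:R : R) `^ p <= K `^ p * u%:R.
  apply: (@le_trans _ _ (\sum_i K `^ (p - 1) * (d i)%:R)).
    apply: ler_sum => i _.
    case: (posnP (d i)) => [->|di0]; first by rewrite powR0 // mulr0.
    rewrite -mulr_powRB1 ?ler0n // mulrC ler_wpM2r ?ler0n //.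
    apply: ge0_ler_powR; rewrite ?nnegrE ?ler0n ?subr_ge0 ?ler_nat //.
  rewrite -mulr_sumr -natr_sum.
  apply: (@le_trans _ _ (K `^ (p - 1) * (k.+1 * u)%:R)).
    by rewrite ler_wpM2l ?powR_ge0 // ler_nat.
  by rewrite natrM mulrA [K `^ _ * _]mulrC mulr_powRB1 // ltW.
apply: (@le_trans _ _ ((K `^ p * u%:R) `^ p^-1)).
  apply: (ge0_ler_powR _ _ _ S1).
  - by rewrite invr_ge0 ltW.
  - by rewrite nnegrE; apply: sumr_ge0 => i _; apply: powR_ge0.
  - by rewrite nnegrE mulr_ge0 ?powR_ge0.
rewrite powRM ?powR_ge0 ?ler0n // -powRrM mulfV // powRr1 //.
Qed.

Lemma d_pC (R : realType) (n : nat) (p : R) (x y : pt n) : d_p p x y = d_p p y x.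
Proof. by rewrite /d_p; congr powR; apply: eq_bigr => i _; rewrite distrC. Qed.

Lemma cu_path_dp (R : realType) (n u : nat) (X : set (pt n)) (x y : pt n) (k : nat) (p : R) :
  1 <= p -> cu_path u X x y k -> d_p p x y <= k%:R * powR u%:R p^-1.
Proof.
move=> p1 [s [sz [pth [lst _]]]].
have [H1 H2] := path_bound pth; rewrite lst sz in H1 H2.
rewrite /d_p.
have E : forall i, (`|x i - y i|%:~R : R) = (D x y i)%:R.
  by move=> i; rewrite /D -abszE.
rewrite (eq_bigr (fun i => ((D x y i)%:R : R) `^ p)); last by move=> i _; rewrite E.
exact: real_bound.
Qed.

Theorem theorem3p4 (R : realType) (n u : nat) (p : R) (m : nat)
  (X A B : set (pt n)) :
  (1 <= u)%N -> (u <= n)%N -> 1 <= p ->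
  cu_connected u X ->
  A `<=` X -> B `<=` X ->
  finite_set A -> finite_set B -> A !=set0 -> B !=set0 ->
  cu_connected u A -> cu_connected u B ->
  H_cu u X A B <= (m%:R : R) ->
  H_p p A B <= m%:R * powR (u%:R) p^-1.
Proof.
move=> u1 un p1 cX AX BX fA fB [a0 Aa0] [b0 Bb0] _ _ Hm.
have lt : H_cu u X A B < m%:R + 2^-1 :> R.
  by apply: le_lt_trans Hm _; rewrite ltrDl invr_gt0 ltr0n.
move: lt; rewrite /H_cu; set S := [set e | _] => lt.
have Sne : S !=set0.
  have [K1 HK1] := @fin_bound _ A (fun a k => exists b', B b' /\ cu_path u X a b' k) fA
    (fun a Aa => let: ex_intro k h := cX a b0 (AX a Aa) (BX b0 Bb0) in
                 ex_intro _ k (ex_intro _ b0 (conj Bb0 h))).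
  have [K2 HK2] := @fin_bound _ B (fun b k => exists a', A a' /\ cu_path u X b a' k) fB
    (fun b Bb => let: ex_intro k h := cX b a0 (BX b Bb) (AX a0 Aa0) in
                 ex_intro _ k (ex_intro _ a0 (conj Aa0 h))).
  exists (maxn K1 K2)%:R; split; first exact: ler0n.
  split.
    move=> a Aa; have [k [kle [b' [Bb' pth]]]] := HK1 a Aa.
    exists b', k; split => //; split => //.
    by rewrite ler_nat (leq_trans kle) ?leq_maxl.
  move=> b Bb; have [k [kle [a' [Aa' pth]]]] := HK2 b Bb.
  exists a', k; split => //; split => //.
  by rewrite ler_nat (leq_trans kle) ?leq_maxr.
have [e [e0 [HA HB]] elt] := inf_lt Sne lt.
have km : forall k : nat, (k%:R : R) <= e -> (k <= m)%N.
  move=> k ke; rewrite leqNgt; apply/negP => mk.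
  have : (m.+1%:R : R) <= k%:R by rewrite ler_nat.
  rewrite -natr1 => h.
  have : (0 : R) < 2^-1 by rewrite invr_gt0 ltr0n.
  lra.
have c0 : 0 <= powR (u%:R : R) p^-1 by apply: powR_ge0.
rewrite /H_p; apply: ge_inf.
  by exists 0 => y [y0 _].
split; first by rewrite mulr_ge0 ?ler0n.
split.
  move=> a Aa; have [b' [k [Bb' [pth ke]]]] := HA a Aa.
  exists b'; split => //; apply: le_trans (cu_path_dp p1 pth) _.
  by rewrite ler_wpM2r // ler_nat km.
move=> b Bb; have [a' [k [Aa' [pth ke]]]] := HB b Bb.
exists a'; split => //; rewrite d_pC; apply: le_trans (cu_path_dp p1 pth) _.
by rewrite ler_wpM2r // ler_nat km.
Qed.
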